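(* Under assumptions (A1)–(A6), for (almost) every $x$, $$\alpha(x)=\Big(1-\frac{\mu_{10}(x)}{\mu_{11}(x)}\Big)\Big(1-\frac{\gamma_0(x)}{\gamma_1(x)}\Big)P(M=1\mid A=1,Y=1,X=x),$$ $$\beta(x)=\Big(1-\frac{\mu_0(x)}{\mu_1(x)}\Big)-\alpha(x),$$ where $\mu_a(x)=P(Y=1\mid A=a,X=x)$.
   Context: Observed data $O=(X,A,M,Y)$ with covariates $X\in\mathbb{R}^d$, binary exposure $A$, binary mediator $M$, binary outcome $Y$. For $a,m\in\{0,1\}$, $Y(a,m)$ is the potential outcome under $A=a,M=m$, $M(a)$ the potential mediator, $Y(a):=Y(a,M(a))$, cross-world $Y(a,M(a'))$ by substitution, all on a common probability space with $O$. $\mu_{am}(x)=P(Y=1\mid A=a,M=m,X=x)$, $\gamma_a(x)=P(M=1\mid A=a,X=x)$. Total probabilities of indirect and direct causation: $\alpha(x)=P(Y(1,M(0))=0,\,Y(0,M(0))=0\mid Y(1,M(1))=1,X=x)$ and $\beta(x)=P(Y(1,M(0))=1,\,Y(0,M(0))=0\mid Y(1,M(1))=1,X=x)$. Assumptions: (A1) $A=a,M=m\Rightarrow Y=Y(a,m)$ and $A=a\Rightarrow M=M(a)$. (A2) $Y(1,1)\ge Y(1,0)\ge Y(0,0)$, $Y(1,1)\ge Y(0,1)$, $M(1)\ge M(0)$. (A3) $A\perp\{Y(1,1),Y(1,0),Y(0,1),Y(0,0),M(1),M(0)\}\mid X$. (A4) $\{Y(1,1),Y(1,0),Y(0,1),Y(0,0)\}\perp\{M(1),M(0)\}\mid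 X$. (A5) for some $\epsilon>0$, $P\{\min_{a,m}P(A=a,M=m\mid X)\ge\epsilon\}=1$. (A6) $P\{P(Y=1\mid A=1,M=1,X)\ge\epsilon\}=1$. *)

(* Defs.v *)
(* Everything is stated for the conditional law given X = x
   (one covariate stratum). *)
From mathcomp Require Import all_boot all_order all_algebra.
Set Implicit Arguments. Unset Strict Implicit. Unset Printing Implicit Defensive.
Import Order.TTheory GRing.Theory Num.Theory.
Local Open Scope ring_scope.

(* Sample space of the (conditional on X = x) joint law of
   (A, (Y(1,1), Y(1,0), Y(0,1), Y(0,0)), (M(1), M(0))). *)
Definition Omega : finType := (bool * (bool * bool * bool * bool) * (bool * bool))%type.

Definition Aof (w : Omega) : bool := w.1.1.
Definition Yvec (w : Omega) : bool * bool * bool * bool := w.1.2.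
Definition Mvec (w : Omega) : bool * bool := w.2.
Definition PO (w : Omega) := (Yvec w, Mvec w).

Definition Ypot (a m : bool) (w : Omega) : bool :=
  let: (y11, y10, y01, y00) := Yvec w in
  match a, m with
  | true, true => y11 | true, false => y10
  | false, true => y01 | false, false => y00 end.
Definition Mpot (a : bool) (w : Omega) : bool :=
  if a then (Mvec w).1 else (Mvec w).2.
Definition Ycw (a a' : bool) (w : Omega) : bool := Ypot a (Mpot a' w) w.

(* observed variables, defined by consistency (A1) *)
Definition Mobs (w : Omega) : bool := Mpot (Aof w) w.
Definition Yobs (w : Omega) : bool := Ypot (Aof w) (Mobs w) w.

Section Prob.
Variable R : realFieldType.

Definition is_distr (p : {ffun Omega -> R}) : Prop :=
  (forall w, 0 <= p w) /\ \sum_w p w = 1.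

Definition Pr (p : {ffun Omega -> R}) (E : pred Omega) : R := \sum_(w | E w) p w.

Definition CPr (p : {ffun Omega -> R}) (E F : pred Omega) : R :=
  Pr p [pred w | E w && F w] / Pr p F.

Definition mu2 (p : {ffun Omega -> R}) (a m : bool) : R :=
  CPr p [pred w | Yobs w] [pred w | (Aof w == a) && (Mobs w == m)].
Definition gam (p : {ffun Omega -> R}) (a : bool) : R := CPr p [pred w | Mobs w] [pred w | Aof w == a].
Definition mu1 (p : {ffun Omega -> R}) (a : bool) : R := CPr p [pred w | Yobs w] [pred w | Aof w == a].

Definition alpha (p : {ffun Omega -> R}) : R :=
  CPr p [pred w | ~~ Ycw true false w && ~~ Ycw false false w] [pred w | Ycw true true w].
Definition beta (p : {ffun Omega -> R}) : R :=
  CPr p [pred w | Ycw true false w && ~~ Ycw false false w] [pred w | Ycw true true w].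

Definition A2 (p : {ffun Omega -> R}) : Prop := forall w, 0 < p w ->
  [/\ Ypot true false w ==> Ypot true true w,
      Ypot false false w ==> Ypot true false w,
      Ypot false true w ==> Ypot true true w &
      Mpot false w ==> Mpot true w].

Definition A3 (p : {ffun Omega -> R}) : Prop := forall a v,
  Pr p [pred w | (Aof w == a) && (PO w == v)] =
  Pr p [pred w | Aof w == a] * Pr p [pred w | PO w == v].

Definition A4 (p : {ffun Omega -> R}) : Prop := forall u n,
  Pr p [pred w | (Yvec w == u) && (Mvec w == n)] =
  Pr p [pred w | Yvec w == u] * Pr p [pred w | Mvec w == n].

Definition A5 (p : {ffun Omega -> R}) (eps : R) : Prop := forall a m,
  eps <= Pr p [pred w | (Aof w == a) && (Mobs w == m)].

Definition A6 (p : {ffun Omega -> R}) (eps : R) : Prop := eps <= mu2 p true true.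

End Prob.

(* Main.v *)
Require Import Defs.
From mathcomp Require Import all_boot all_order all_algebra ring lra.
Import Order.TTheory GRing.Theory Num.Theory.
Local Open Scope ring_scope.
Section S.
Variable R : realFieldType.
Variable p : {ffun Omega -> R}.
Hypothesis p0 : forall w, 0 <= p w.
Hypothesis p1 : \sum_w p w = 1.

Definition PT : finType := (bool * bool * bool * bool * (bool * bool))%type.

Lemma Pr_as (F G : pred Omega) : (forall w, 0 < p w -> F w = G w) -> Pr p F = Pr p G.
Proof.
move=> h; rewrite /Pr (big_mkcond F) (big_mkcond G); apply: eq_bigr => w _.
have := p0 w; rewrite le_eqVlt => /orP [/eqP <-| /h ->]; last by [].
by case: (F w); case: (G w).
Qed.

Lemma Pr_ext (F G : pred Omega) : (forall w, F w = G w) -> Pr p F = Pr p G.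
Proof. by move=> h; apply: Pr_as => w _. Qed.

Lemma Pr_split (F G : pred Omega) :
  Pr p F = Pr p (fun w => F w && G w) + Pr p (fun w => F w && ~~ G w).
Proof. by rewrite /Pr (bigID G). Qed.

Lemma Pr_compl (F : pred Omega) : Pr p (fun w => ~~ F w) = 1 - Pr p F.
Proof.
rewrite -p1 (bigID F) /= /Pr; rewrite addrC addrK //.
Qed.

Lemma Pr_ge0 (F : pred Omega) : 0 <= Pr p F.
Proof. by apply: sumr_ge0. Qed.

Lemma Pr_le (F G : pred Omega) : (forall w, F w -> G w) -> Pr p F <= Pr p G.
Proof.
move=> h; rewrite (Pr_split G F) (@Pr_ext (fun w => G w && F w) F).
  by rewrite lerDl Pr_ge0.
by move=> w; case E: (F w); rewrite ?andbT ?andbF // h.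
Qed.

Lemma Pr_partition (J : finType) (f : Omega -> J) (E : pred Omega) (Q : pred J) :
  Pr p (fun w => E w && Q (f w)) = \sum_(j | Q j) Pr p (fun w => E w && (f w == j)).
Proof.
rewrite /Pr (partition_big f Q); last by move=> w /andP[].
apply: eq_bigr => j Qj; apply: eq_bigl => w /=.
by case: eqP => [->|]; rewrite ?andbT ?andbF // Qj andbT.
Qed.

Lemma A3' (a : bool) (H : pred PT) : A3 p ->
  Pr p (fun w => (Aof w == a) && H (PO w)) =
  Pr p (fun w => Aof w == a) * Pr p (fun w => H (PO w)).
Proof.
move=> h3; rewrite (@Pr_partition PT PO (fun w => Aof w == a) H).
rewrite (@Pr_ext (fun w => H (PO w)) (fun w => true && H (PO w))) // Pr_partition.
rewrite mulr_sumr; apply: eq_bigr => v _; exact: h3.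
Qed.

Lemma A4' (H1 : pred (bool * bool * bool * bool)) (H2 : pred (bool * bool)) : A4 p ->
  Pr p (fun w => H1 (Yvec w) && H2 (Mvec w)) =
  Pr p (fun w => H1 (Yvec w)) * Pr p (fun w => H2 (Mvec w)).
Proof.
move=> h4.
rewrite (@Pr_ext (fun w => H1 (Yvec w) && H2 (Mvec w)) (fun w => H2 (Mvec w) && H1 (Yvec w)));
  last by move=> w; rewrite andbC.
rewrite (@Pr_partition _ Yvec).
rewrite (@Pr_ext (fun w => H1 (Yvec w)) (fun w => true && H1 (Yvec w))) // Pr_partition.
rewrite mulr_suml; apply: eq_bigr => u _.
rewrite (@Pr_ext (fun w => H2 (Mvec w)) (fun w => true && H2 (Mvec w))) // Pr_partition.
rewrite (@Pr_ext _ (fun w => (Yvec w == u) && H2 (Mvec w))); last by move=> w; rewrite andbC.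
rewrite Pr_partition mulr_sumr; apply: eq_bigr => n _.
rewrite -h4; apply: Pr_ext => w /=; by [].
Qed.

Lemma obs (F : pred Omega) (a : bool) (H : pred PT) : A3 p ->
  (forall w, F w = (Aof w == a) && H (PO w)) ->
  Pr p F = Pr p (fun w => Aof w == a) * Pr p (fun w => H (PO w)).
Proof. by move=> h3 h; rewrite -A3' //; apply: Pr_ext. Qed.

Ltac bruteforce := move=> [[[] [[[[] []] []] []]] [[] []]].
Ltac bruteas h := move=> [[[] [[[[] []] []] []]] [[] []]] /h /= []; by [].

Lemma main (eps : R) :
  0 < eps ->
  A2 p -> A3 p -> A4 p -> A5 p eps -> A6 p eps ->
  alpha p = (1 - mu2 p true false / mu2 p true true) * (1 - gam p false / gam p true) *
            CPr p [pred w | Mobs w] [pred w | Aof w && Yobs w]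
  /\ beta p = (1 - mu1 p false / mu1 p true) - alpha p.
Proof.
move=> eps0 h2 h3 h4 h5 h6.
set PA1 := Pr p (fun w => Aof w == true).
set PA0 := Pr p (fun w => Aof w == false).
set g1 := Pr p (fun w => (Mvec w).1).
set g0 := Pr p (fun w => (Mvec w).2).
set y11 := Pr p (fun w => (Yvec w).1.1.1).
set y10 := Pr p (fun w => (Yvec w).1.1.2).
set D := Pr p (fun w => Ycw true true w).
set D0 := Pr p (fun w => Ycw false false w).
have cM1 : Pr p (fun w => ~~ (Mvec w).1) = 1 - g1 by rewrite Pr_compl.
have F1 : Pr p [pred w | (Aof w == true) && (Mobs w == true)] = PA1 * g1.
  by apply: (@obs _ _ (fun v => v.2.1)) => //; bruteforce.
have F2 : Pr p [pred w | (Aof w == true) && (Mobs w == false)] = PA1 * (1 - g1).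
  by rewrite -cM1; apply: (@obs _ _ (fun v => ~~ v.2.1)) => //; bruteforce.
have F2' : Pr p [pred w | (Aof w == false) && (Mobs w == false)] = PA0 * (1 - g0).
  by rewrite -Pr_compl; apply: (@obs _ _ (fun v => ~~ v.2.2)) => //; bruteforce.
have F3 : Pr p [pred w | Yobs w && ((Aof w == true) && (Mobs w == true))] = PA1 * (g1 * y11).
  rewrite (@obs _ true (fun v => v.2.1 && v.1.1.1.1)) //; last by bruteforce.
  congr (_ * _); rewrite (@Pr_ext _ (fun w => (Yvec w).1.1.1 && (Mvec w).1)).
    by rewrite (@A4' (fun u => u.1.1.1) (fun n => n.1)) // mulrC.
  by bruteforce.
have F4 : Pr p [pred w | Yobs w && ((Aof w == true) && (Mobs w == false))] = PA1 * ((1 - g1) * y10).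
  rewrite (@obs _ true (fun v => ~~ v.2.1 && v.1.1.1.2)) //; last by bruteforce.
  congr (_ * _); rewrite (@Pr_ext _ (fun w => (Yvec w).1.1.2 && ~~ (Mvec w).1)).
    by rewrite (@A4' (fun u => u.1.1.2) (fun n => ~~ n.1)) // cM1 mulrC.
  by bruteforce.
have F5 : Pr p [pred w | Mobs w && (Aof w == false)] = PA0 * g0.
  by apply: (@obs _ _ (fun v => v.2.2)) => //; bruteforce.
have F6 : Pr p [pred w | Mobs w && (Aof w == true)] = PA1 * g1.
  by apply: (@obs _ _ (fun v => v.2.1)) => //; bruteforce.
have F7 : Pr p [pred w | Mobs w && (Aof w && Yobs w)] = PA1 * (g1 * y11).
  rewrite (@obs _ true (fun v => v.2.1 && v.1.1.1.1)) //; last by bruteforce.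
  congr (_ * _); rewrite (@Pr_ext _ (fun w => (Yvec w).1.1.1 && (Mvec w).1)).
    by rewrite (@A4' (fun u => u.1.1.1) (fun n => n.1)) // mulrC.
  by bruteforce.
have F8 : Pr p [pred w | Aof w && Yobs w] = PA1 * D.
  by apply: (@obs _ true (fun v => Ycw true true ((true, v.1), v.2))) => //; bruteforce.
have F9 : Pr p [pred w | Yobs w && (Aof w == true)] = PA1 * D.
  by apply: (@obs _ _ (fun v => Ycw true true ((true, v.1), v.2))) => //; bruteforce.
have F10 : Pr p [pred w | Yobs w && (Aof w == false)] = PA0 * D0.
  by apply: (@obs _ _ (fun v => Ycw false false ((true, v.1), v.2))) => //; bruteforce.
have FD : D = g1 * y11 + (1 - g1) * y10.
  rewrite /D (Pr_split _ (fun w => (Mvec w).1)).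
  rewrite (@Pr_ext _ (fun w => (Yvec w).1.1.1 && (Mvec w).1)); last by bruteforce.
  rewrite (@Pr_ext (fun w => _ && ~~ _) (fun w => (Yvec w).1.1.2 && ~~ (Mvec w).1)); last by bruteforce.
  rewrite (@A4' (fun u => u.1.1.1) (fun n => n.1)) //.
  rewrite (@A4' (fun u => u.1.1.2) (fun n => ~~ n.1)) // cM1.
  by rewrite mulrC [_ * y10]mulrC.
set Na := Pr p [pred w | (~~ Ycw true false w && ~~ Ycw false false w) && Ycw true true w].
set Nb := Pr p [pred w | (Ycw true false w && ~~ Ycw false false w) && Ycw true true w].
have FNa : Na = (g1 - g0) * (y11 - y10).
  rewrite /Na (@Pr_as _ (fun w => ((Yvec w).1.1.1 && ~~ (Yvec w).1.1.2) && ((Mvec w).1 && ~~ (Mvec w).2))); last by bruteas h2.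
  rewrite (@A4' (fun u => u.1.1.1 && ~~ u.1.1.2) (fun n => n.1 && ~~ n.2)) // mulrC.
  have -> : Pr p (fun w => (Mvec w).1 && ~~ (Mvec w).2) = g1 - g0.
    rewrite /g1 [in RHS](Pr_split _ (fun w => (Mvec w).2)) [in RHS](@Pr_as (fun w => _ && _) (fun w => (Mvec w).2)).
      by rewrite addrAC subrr add0r.
    by bruteas h2.
  have -> : Pr p (fun w => (Yvec w).1.1.1 && ~~ (Yvec w).1.1.2) = y11 - y10; last by [].
  rewrite /y11 [in RHS](Pr_split _ (fun w => (Yvec w).1.1.2)) [in RHS](@Pr_as (fun w => _ && _) (fun w => (Yvec w).1.1.2)).
    by rewrite addrAC subrr add0r.
  by bruteas h2.
have FNab : Na + Nb = D - D0.
  rewrite /D [in RHS](Pr_split _ (fun w => Ycw false false w)).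
  rewrite [in RHS](@Pr_as (fun w => _ && _) (fun w => Ycw false false w)); last by bruteas h2.
  rewrite addrAC subrr add0r [in RHS](Pr_split _ (fun w => Ycw true false w)) addrC.
  by congr (_ + _); apply: Pr_ext; bruteforce.
have e11 : eps <= PA1 * g1 by rewrite -F1; exact: h5.
have e10 : eps <= PA1 * (1 - g1) by rewrite -F2; exact: h5.
have e00 : eps <= PA0 * (1 - g0) by rewrite -F2'; exact: h5.
have PA1g : 0 <= PA1 by exact: Pr_ge0.
have PA0g : 0 <= PA0 by exact: Pr_ge0.
have g1g : 0 <= g1 by exact: Pr_ge0.
have y10g : 0 <= y10 by exact: Pr_ge0.
have PA1p : 0 < PA1 by nra.
have PA0p : 0 < PA0.
  apply: (lt_le_trans eps0); apply: (le_trans (h5 false false)).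
  by apply: Pr_le => w /andP[].
have g1p : 0 < g1 by have := lt_le_trans eps0 e11; rewrite pmulr_rgt0.
have g1l : 0 < 1 - g1 by have := lt_le_trans eps0 e10; rewrite pmulr_rgt0.
have Emu11 : mu2 p true true = y11.
  by rewrite /mu2 /CPr F3 F1; field; apply/andP; split; rewrite gt_eqF.
have Emu10 : mu2 p true false = y10.
  by rewrite /mu2 /CPr F4 F2; field; apply/andP; split; rewrite gt_eqF.
have y11p : 0 < y11 by move: h6; rewrite /A6 Emu11; lra.
have Dp : 0 < D by rewrite FD; nra.
rewrite /alpha /beta /gam /mu1 /CPr -/Na -/Nb Emu11 Emu10 F5 F6 F7 F8 F9 F10.
have -> : Nb = D - D0 - Na by rewrite -FNab; ring.
rewrite FNa.
have -> : Pr p [pred w | Ycw true true w] = D by [].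
have -> : Pr p [pred w | Aof w == false] = PA0 by [].
have -> : Pr p [pred w | Aof w == true] = PA1 by [].
have nz1 := gt_eqF PA1p. have nz2 := gt_eqF PA0p. have nz3 := gt_eqF g1p.
have nz4 := gt_eqF y11p. have nz5 := gt_eqF Dp.
by split; field; rewrite ?nz1 ?nz2 ?nz3 ?nz4 ?nz5.
Qed.
End S.

Theorem proposition10 (R : realFieldType) (p : {ffun Omega -> R}) (eps : R) :
  is_distr p -> 0 < eps ->
  A2 p -> A3 p -> A4 p -> A5 p eps -> A6 p eps ->
  alpha p = (1 - mu2 p true false / mu2 p true true) * (1 - gam p false / gam p true) *
            CPr p [pred w | Mobs w] [pred w | Aof w && Yobs w]
  /\ beta p = (1 - mu1 p false / mu1 p true) - alpha p.
Proof. by move=> [hp0 hp1]; apply: main. Qed.
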